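(* Let $(M,d)$ be a pointed metric space, let $\mu\in ba(\widetilde M)$ be optimal with $\|\mu\|=1$, let $\alpha>0$, and let $f\in B_{\mathrm{Lip}_0(M)}$ satisfy $(\Phi^*\mu)(f)>1-\alpha^2$. Let $A=\{(x,y)\in\widetilde M: f(m_{x,y})\ge1-\alpha\}$. Then $\mu(A)\ge1-\alpha$.
   Context: $M$ has base point $0$; $\mathrm{Lip}_0(M)$ is the real Banach space of Lipschitz $f\colon M\to\mathbb R$ with $f(0)=0$, normed by the best Lipschitz constant, with unit ball $B_{\mathrm{Lip}_0(M)}$. $\widetilde M=\{(x,y)\in M\times M:x\ne y\}$ and $f(m_{x,y})=(f(x)-f(y))/d(x,y)$. $ba(\widetilde M)$ is the Banach space of bounded finitely additive signed measures on the power set of $\widetilde M$ with norm $|\mu|(\widetilde M)$. $\Phi f(x,y)=(f(x)-f(y))/d(x,y)$ and $(\Phi^*\mu)(f)=\int_{\widetilde M}\Phi f\,d\mu$. A measure $\mu\in ba(\widetilde M)$ is called optimal if it is positive and $\|\Phi^*\mu\|=\|\mu\|$. *)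

(* Defs.v *)
From Stdlib Require Import Reals List Lra.
Open Scope R_scope.

Record is_metric (M : Type) (d : M -> M -> R) : Prop := {
  metric_nonneg : forall x y, 0 <= d x y;
  metric_eq0 : forall x y, d x y = 0 <-> x = y;
  metric_sym : forall x y, d x y = d y x;
  metric_tri : forall x y z, d x z <= d x y + d y z
}.

Definition Mt (M : Type) : Type := {p : M * M | fst p <> snd p}.

(* Phi f (x,y) = (f x - f y) / d(x,y), i.e. f(m_{x,y}) *)
Definition Phi (M : Type) (d : M -> M -> R) (f : M -> R) (p : Mt M) : R :=
  (f (fst (proj1_sig p)) - f (snd (proj1_sig p))) / d (fst (proj1_sig p)) (snd (proj1_sig p)).

Definition Lip0 (M : Type) (d : M -> M -> R) (z : M) (f : M -> R) : Prop :=
  f z = 0 /\ exists L, forall x y, Rabs (f x - f y) <= L * d x y.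

Definition unit_ball (M : Type) (d : M -> M -> R) (z : M) (f : M -> R) : Prop :=
  Lip0 M d z f /\ forall x y, x <> y -> Rabs (f x - f y) / d x y <= 1.

Definition emptyset {T : Type} : T -> Prop := fun _ => False.

Definition disjoint {T : Type} (A B : T -> Prop) : Prop := forall t, ~ (A t /\ B t).

Definition finitely_additive {T : Type} (mu : (T -> Prop) -> R) : Prop :=
  forall A B, disjoint A B -> mu (fun t => A t \/ B t) = mu A + mu B.

Definition bounded_measure {T : Type} (mu : (T -> Prop) -> R) : Prop :=
  exists B, forall E, Rabs (mu E) <= B.

Definition is_ba {T : Type} (mu : (T -> Prop) -> R) : Prop :=
  finitely_additive mu /\ bounded_measure mu.

Definition positive_measure {T : Type} (mu : (T -> Prop) -> R) : Prop :=
  forall E, 0 <= mu E.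

Definition pairwise_disjoint {T : Type} (l : list (T -> Prop)) : Prop :=
  forall i j, (i < j)%nat -> (j < length l)%nat ->
    disjoint (nth i l emptyset) (nth j l emptyset).

Definition lsum (l : list R) : R := fold_right Rplus 0 l.

Definition ba_norm_is {T : Type} (mu : (T -> Prop) -> R) (N : R) : Prop :=
  is_lub (fun r => exists l : list (T -> Prop), pairwise_disjoint l /\
            r = lsum (map (fun E => Rabs (mu E)) l)) N.

(* finite partitions of T, refinement, tagged Riemann sums; the integral is the
   Moore-Smith limit of tagged Riemann sums along the directed set of partitions *)
Definition partition {T : Type} (l : list (T -> Prop)) : Prop :=
  pairwise_disjoint l /\ forall t, exists i, (i < length l)%nat /\ nth i l emptyset t.

Definition refines {T : Type} (Q P : list (T -> Prop)) : Prop :=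
  forall i, (i < length Q)%nat -> exists j, (j < length P)%nat /\
    forall t, nth i Q emptyset t -> nth j P emptyset t.

Definition riemann_sum {T : Type} (mu : (T -> Prop) -> R) (g : T -> R)
    (Q : list (T -> Prop)) (tag : nat -> T) : R :=
  lsum (map (fun i => g (tag i) * mu (nth i Q emptyset)) (seq 0 (length Q))).

Definition is_integral {T : Type} (mu : (T -> Prop) -> R) (g : T -> R) (I : R) : Prop :=
  forall eps, 0 < eps -> exists P, partition P /\
    forall Q tag, partition Q -> refines Q P ->
      (forall i, (i < length Q)%nat -> (exists t, nth i Q emptyset t) ->
          nth i Q emptyset (tag i)) ->
      Rabs (riemann_sum mu g Q tag - I) < eps.

Definition PhiStar_is (M : Type) (d : M -> M -> R) (mu : (Mt M -> Prop) -> R)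
    (f : M -> R) (I : R) : Prop :=
  is_integral mu (Phi M d f) I.

Definition PhiStar_norm_is (M : Type) (d : M -> M -> R) (z : M)
    (mu : (Mt M -> Prop) -> R) (N : R) : Prop :=
  is_lub (fun r => exists f I, unit_ball M d z f /\ PhiStar_is M d mu f I /\ r = Rabs I) N.

Definition optimal (M : Type) (d : M -> M -> R) (z : M) (mu : (Mt M -> Prop) -> R) : Prop :=
  is_ba mu /\ positive_measure mu /\
  exists N, ba_norm_is mu N /\ PhiStar_norm_is M d z mu N.

(* Main.v *)
Require Import Defs.
From Stdlib Require Import Reals List Lra Lia Classical ClassicalEpsilon FunctionalExtensionality PropExtensionality.
Open Scope R_scope.

Lemma set_ext {T : Type} (mu : (T -> Prop) -> R) (X Y : T -> Prop) :
  (forall t, X t <-> Y t) -> mu X = mu Y.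
Proof.
  intro H. f_equal. apply functional_extensionality. intro t.
  apply propositional_extensionality. apply H.
Qed.

Lemma mu_empty {T : Type} (mu : (T -> Prop) -> R) :
  finitely_additive mu -> mu emptyset = 0.
Proof.
  intro Ha. assert (H := Ha emptyset emptyset).
  assert (Hd : disjoint (@emptyset T) emptyset) by (intros t [h _]; exact h).
  specialize (H Hd).
  rewrite (set_ext mu (fun t => emptyset t \/ emptyset t) emptyset) in H.
  - lra.
  - intro t; unfold emptyset; tauto.
Qed.

Lemma mu_empty' {T : Type} (mu : (T -> Prop) -> R) (X : T -> Prop) :
  finitely_additive mu -> (forall t, ~ X t) -> mu X = 0.
Proof.
  intros Ha H. rewrite (set_ext mu X emptyset). apply mu_empty; auto.
  intro t; unfold emptyset; specialize (H t); tauto.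
Qed.

Lemma mu_mono {T : Type} (mu : (T -> Prop) -> R) (X Y : T -> Prop) :
  finitely_additive mu -> positive_measure mu -> (forall t, X t -> Y t) -> mu X <= mu Y.
Proof.
  intros Ha Hp H.
  rewrite (set_ext mu Y (fun t => X t \/ (Y t /\ ~ X t))).
  - rewrite Ha. pose proof (Hp (fun t => Y t /\ ~ X t)). lra.
    intros t [h1 [_ h2]]. tauto.
  - intro t. specialize (H t). tauto.
Qed.

Fixpoint bigU {T : Type} (l : list (T -> Prop)) : T -> Prop :=
  match l with
  | nil => emptyset
  | E :: l' => fun t => E t \/ bigU l' t
  end.

Lemma bigU_spec {T : Type} (l : list (T -> Prop)) t :
  bigU l t <-> exists i, (i < length l)%nat /\ nth i l emptyset t.
Proof.
  induction l as [|E l IH]; simpl.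
  - split. intro h; destruct h. intros [i [h _]]. lia.
  - split.
    + intros [h|h]. exists 0%nat; split; [lia|exact h].
      apply IH in h. destruct h as [i [h1 h2]]. exists (S i). split; [lia|exact h2].
    + intros [[|i] [h1 h2]]. left; exact h2. right. apply IH. exists i. split; [lia|exact h2].
Qed.

Lemma pd_cons {T : Type} (E : T -> Prop) l :
  pairwise_disjoint (E :: l) ->
  pairwise_disjoint l /\ forall j, (j < length l)%nat -> disjoint E (nth j l emptyset).
Proof.
  intro H. split.
  - intros i j h1 h2. apply (H (S i) (S j)); simpl; lia.
  - intros j h. apply (H 0%nat (S j)); simpl; lia.
Qed.

Lemma lsum_additive {T : Type} (mu : (T -> Prop) -> R) l :
  finitely_additive mu -> pairwise_disjoint l -> lsum (map mu l) = mu (bigU l).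
Proof.
  intros Ha. induction l as [|E l IH]; intro H; simpl.
  - symmetry. apply mu_empty; auto.
  - apply pd_cons in H. destruct H as [H1 H2].
    rewrite IH by auto. symmetry. apply Ha.
    intros t [h1 h2]. apply bigU_spec in h2. destruct h2 as [j [hj1 hj2]].
    apply (H2 j hj1 t). tauto.
Qed.

Lemma lsum_le (f g : nat -> R) l :
  (forall i, In i l -> f i <= g i) -> lsum (map f l) <= lsum (map g l).
Proof.
  induction l as [|a l IH]; simpl; intros H. lra.
  assert (f a <= g a) by auto. assert (lsum (map f l) <= lsum (map g l)) by auto. lra.
Qed.

Lemma lsum_lin (f g : nat -> R) (c : R) l :
  lsum (map (fun i => f i - c * g i) l) = lsum (map f l) - c * lsum (map g l).
Proof. induction l; simpl. lra. rewrite IHl. lra. Qed.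

Lemma map_seq_nth {A B : Type} (F : A -> B) (d : A) (Q : list A) :
  map (fun i => F (nth i Q d)) (seq 0 (length Q)) = map F Q.
Proof.
  induction Q as [|a Q IH]; simpl. reflexivity.
  f_equal. rewrite <- seq_shift, map_map. simpl. exact IH.
Qed.

Lemma partition_sum {T : Type} (mu : (T -> Prop) -> R) (Q : list (T -> Prop)) (S : T -> Prop) :
  finitely_additive mu -> Defs.partition Q ->
  lsum (map (fun E => mu (fun t => E t /\ S t)) Q) = mu S.
Proof.
  intros Ha [Hd Hc].
  rewrite <- (map_map (fun E => fun t => E t /\ S t) mu).
  rewrite lsum_additive; auto.
  - apply set_ext. intro t. rewrite bigU_spec. rewrite length_map. split.
    + intros [i [h1 h2]].
      rewrite (nth_indep _ _ (fun t => emptyset t /\ S t)) in h2 by (rewrite length_map; auto).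
      rewrite (map_nth (fun E => fun t => E t /\ S t) _ emptyset) in h2. tauto.
    + intro hs. destruct (Hc t) as [i [h1 h2]]. exists i. split; auto.
      rewrite (nth_indep _ _ (fun t => emptyset t /\ S t)) by (rewrite length_map; auto).
      rewrite (map_nth (fun E => fun t => E t /\ S t) _ emptyset). tauto.
  - intros i j h1 h2. rewrite length_map in h2.
    rewrite (nth_indep _ _ (fun t => emptyset t /\ S t)) by (rewrite length_map; lia).
    rewrite (@nth_indep _ _ j _ (fun t => emptyset t /\ S t)) by (rewrite length_map; lia).
    rewrite !(map_nth (fun E => fun t => E t /\ S t) _ emptyset). intros t [[a _] [b _]]. apply (Hd i j h1 h2 t). tauto.
Qed.

Lemma lsum_abs_pos {T : Type} (mu : (T -> Prop) -> R) l :
  positive_measure mu -> map (fun E => Rabs (mu E)) l = map mu l.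
Proof.
  intro Hp. apply map_ext. intro E. apply Rabs_right. apply Rle_ge, Hp.
Qed.

Theorem lemma3p1 (M : Type) (d : M -> M -> R) (z : M) (Hd : is_metric M d)
  (mu : (Mt M -> Prop) -> R) (Hopt : optimal M d z mu) (Hnorm : ba_norm_is mu 1)
  (alpha : R) (Halpha : 0 < alpha)
  (f : M -> R) (Hf : unit_ball M d z f)
  (I : R) (HI : PhiStar_is M d mu f I) (HIgt : I > 1 - alpha ^ 2) :
  mu (fun p => Phi M d f p >= 1 - alpha) >= 1 - alpha.
Proof.
  destruct Hopt as [[Ha _] [Hp _]].
  set (TT := fun _ : Mt M => True).
  assert (HT : mu TT = 1).
  { destruct Hnorm as [Hub Hlub]. apply Rle_antisym.
    - assert (H := Hub (Rabs (mu TT))). rewrite Rabs_right in H by (apply Rle_ge, Hp).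
      apply H. exists (TT :: nil). split.
      + intros i j h1 h2. simpl in h2. lia.
      + simpl. rewrite Rabs_right by (apply Rle_ge, Hp). lra.
    - apply Hlub. intros r [l [h1 h2]]. subst r.
      rewrite lsum_abs_pos by auto. rewrite lsum_additive by auto.
      apply mu_mono; auto. intros; exact Logic.I. }
  assert (Hphi : forall p, Phi M d f p <= 1).
  { intros [[x y] hxy]. unfold Phi; simpl in *.
    destruct Hf as [_ Hf]. specialize (Hf x y hxy).
    assert (0 < d x y).
    { destruct (metric_nonneg M d Hd x y); auto.
      exfalso. apply hxy. apply (metric_eq0 M d Hd). auto. }
    eapply Rle_trans; [|exact Hf]. unfold Rdiv.
    apply Rmult_le_compat_r. left; apply Rinv_0_lt_compat; auto. apply Rle_abs. }
  set (A := fun p => Phi M d f p >= 1 - alpha).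
  set (B := fun p => ~ A p).
  assert (Hinh : inhabited (Mt M)).
  { destruct (classic (inhabited (Mt M))) as [h|h]; auto.
    exfalso. assert (mu TT = 0). { apply mu_empty'; [auto|]. intros t _. apply h. constructor; exact t. }
    lra. }
  assert (Hkey : I <= 1 - alpha * mu B).
  { apply Rnot_lt_le. intro hlt.
    set (eps := I - (1 - alpha * mu B)).
    assert (heps : 0 < eps) by (unfold eps; lra).
    destruct (HI eps heps) as [P [HP HPQ]].
    set (Q := map (fun E => fun t => E t /\ A t) P ++ map (fun E => fun t => E t /\ B t) P).
    set (n := length P).
    assert (HlQ : length Q = (2 * n)%nat).
    { unfold Q, n. rewrite length_app, !length_map. lia. }
    assert (HnQ : forall i, (i < 2 * n)%nat ->
      ((i < n)%nat /\ forall t, nth i Q emptyset t <-> nth i P emptyset t /\ A t) \/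
      ((n <= i)%nat /\ forall t, nth i Q emptyset t <-> nth (i - n) P emptyset t /\ B t)).
    { intros i hi. destruct (Nat.lt_ge_cases i n) as [h|h].
      - left. split; auto. intro t. unfold Q. rewrite app_nth1 by (rewrite length_map; auto).
        rewrite (nth_indep _ _ (fun t => emptyset t /\ A t)) by (rewrite length_map; auto).
        rewrite (map_nth (fun E => fun t => E t /\ A t) _ emptyset). tauto.
      - right. split; auto. intro t. unfold Q. rewrite app_nth2 by (rewrite length_map; auto).
        rewrite length_map. fold n.
        rewrite (nth_indep _ _ (fun t => emptyset t /\ B t)) by (rewrite length_map; fold n; lia).
        rewrite (map_nth (fun E => fun t => E t /\ B t) _ emptyset). tauto. }
    assert (HQpart : Defs.partition Q).
    { destruct HP as [HPd HPc]. split.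
      - intros i j h1 h2. rewrite HlQ in h2. intros t [ht1 ht2].
        destruct (HnQ i ltac:(lia)) as [[a1 b1]|[a1 b1]];
        destruct (HnQ j ltac:(lia)) as [[a2 b2]|[a2 b2]];
        apply b1 in ht1; apply b2 in ht2.
        + apply (HPd i j h1 ltac:(fold n; lia) t). tauto.
        + unfold B in *; tauto.
        + lia.
        + apply (HPd (i - n)%nat (j - n)%nat ltac:(lia) ltac:(fold n; lia) t). tauto.
      - intro t. destruct (HPc t) as [j [hj1 hj2]]. fold n in hj1.
        destruct (classic (A t)) as [hA|hA].
        + exists j. split. lia. destruct (HnQ j ltac:(lia)) as [[_ b]|[c _]]; [apply b; auto|lia].
        + exists (j + n)%nat. split. lia.
          destruct (HnQ (j + n)%nat ltac:(lia)) as [[c _]|[_ b]]; [lia|apply b].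
          replace (j + n - n)%nat with j by lia. unfold B; auto. }
    assert (HQref : refines Q P).
    { intros i hi. rewrite HlQ in hi. destruct (HnQ i hi) as [[a b]|[a b]].
      - exists i. split. auto. intros t ht. apply b in ht. tauto.
      - exists (i - n)%nat. split. fold n; lia. intros t ht. apply b in ht. tauto. }
    set (tag := fun i => epsilon Hinh (fun t => nth i Q emptyset t)).
    assert (Htag : forall i, (i < length Q)%nat -> (exists t, nth i Q emptyset t) ->
                   nth i Q emptyset (tag i)).
    { intros i _ h. unfold tag. apply epsilon_spec. exact h. }
    specialize (HPQ Q tag HQpart HQref Htag).
    assert (Hrs : riemann_sum mu (Phi M d f) Q tag <= mu TT - alpha * mu B).
    { unfold riemann_sum.
      rewrite <- (partition_sum mu Q TT), <- (partition_sum mu Q B) by auto.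
      rewrite <- (map_seq_nth (fun E => mu (fun t => E t /\ TT t)) emptyset).
      rewrite <- (map_seq_nth (fun E => mu (fun t => E t /\ B t)) emptyset).
      rewrite <- lsum_lin. apply lsum_le. intros i hi.
      apply in_seq in hi. destruct hi as [_ hi]. simpl in hi.
      rewrite (set_ext mu (fun t => nth i Q emptyset t /\ TT t) (nth i Q emptyset))
        by (intro t; unfold TT; tauto).
      destruct (classic (exists t, nth i Q emptyset t)) as [hne|hne].
      - assert (ht := Htag i hi hne).
        pose proof (Hp (nth i Q emptyset)).
        rewrite HlQ in hi. destruct (HnQ i hi) as [[_ b]|[_ b]].
        + rewrite (mu_empty' mu (fun t => nth i Q emptyset t /\ B t)) by
            (auto; intros t [h1 h2]; apply b in h1; unfold B in *; tauto).
          pose proof (Hphi (tag i)). nra.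
        + rewrite (set_ext mu (fun t => nth i Q emptyset t /\ B t) (nth i Q emptyset))
            by (intro t; split; [tauto|intro h; split; auto; apply b in h; tauto]).
          apply b in ht. destruct ht as [_ ht]. unfold B, A in ht.
          apply Rnot_ge_lt in ht. nra.
      - rewrite (mu_empty' mu (nth i Q emptyset)) by (auto; intros t h; apply hne; eauto).
        rewrite (mu_empty' mu (fun t => nth i Q emptyset t /\ B t)) by
            (auto; intros t [h _]; apply hne; eauto).
        lra. }
    rewrite HT in Hrs. apply Rabs_def2 in HPQ. unfold eps in HPQ. lra. }
  assert (HAB : mu A + mu B = 1).
  { rewrite <- HT, <- Ha. apply set_ext. intro t; unfold TT, B; tauto.
    intros t [h1 h2]; unfold B in h2; tauto. }
  assert (mu B < alpha).
  { assert (alpha * mu B < alpha * alpha) by (simpl in HIgt; lra).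
    apply Rmult_lt_reg_l in H; auto. }
  fold A. lra.
Qed.
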